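(* Let $N'\ge2$ and let $\mu_1<0<\mu_2<\cdots<\mu_{N'}$ be real numbers. Let $\delta$ be a sufficiently small positive constant ($0<\delta\ll1$, in particular $\delta<\mu_2$) and let $0<a<1<b<c$ be constants. Define $$\bar x_1=\frac{b-1}{2b[-\mu_1+\delta]},\qquad \bar x_k(m)=\frac{\frac{c+m-1}{m}-a}{2a[\mu_k-\delta]}\quad(2\le k\le N',\ m\ge1),$$ and let $\pi_1$ satisfy $$0<\pi_1\le\frac{\frac{b-1}{2b[-\mu_1+\delta]}}{\frac{b-1}{2b[-\mu_1+\delta]}+\frac{c-a}{2a[\mu_{N'}-\delta]}}.$$ Let $g:\mathbb R^+\to\mathbb R^+$ be differentiable with $g'(\mu)\ge0$ for $\mu>0$, and let $g(\mu_1)$ be an arbitrary given real constant. For a nonempty set $S=\{k_1<\cdots<k_{m'}\}\subseteq\{2,\dots,N'\}$ define $$\Delta(S)=\frac{1-\pi_1}{\pi_1}\bar x_1-\sum_{l=1}^{m'}\bar x_{k_l}(m'),\qquad G(S)=\frac{\sum_{l=1}^{m'}\bar x_{k_l}(m')g(\mu_{k_l})+g(\mu_{k_1})\Delta(S)}{\sum_{l=1}^{m'}\bar x_{k_l}(m')+\Delta(S)},$$ and let $\mathcal K$ be the family of those $S$ with $\pi_1\le\frac{\bar x_1}{\bar x_1+\sum_{l=1}^{m'}\bar x_{k_l}(m')}$. Consider minimizing $$\Psi(x_1,x_{k_1},\dots,x_{k_{m'}})=\pi_1 g(\mu_1)+(1-\pi_1)\frac{\sum_{l=1}^{m'}x_{k_l}g(\mu_{k_l})}{\sum_{l=1}^{m'}x_{k_l}}$$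 over all $S=\{k_1<\cdots<k_{m'}\}\in\mathcal K$ and all positive reals $x_1,x_{k_1},\dots,x_{k_{m'}}$ satisfying $x_{k_l}\ge\bar x_{k_l}(m')$ for $l=1,\dots,m'$ and $\sum_{l=1}^{m'}x_{k_l}=\frac{1-\pi_1}{\pi_1}x_1\le\frac{1-\pi_1}{\pi_1}\bar x_1$. Let $S^*=\{k_1^*<\cdots<k_m^*\}\in\arg\min_{S\in\mathcal K}G(S)$. Then the minimal value is $$\Psi\big(\bar x_1,\ \bar x_{k_1^*}(m)+\Delta(S^* ),\ \bar x_{k_2^*}(m),\dots,\bar x_{k_m^*}(m)\big)=\pi_1 g(\mu_1)+(1-\pi_1)G(S^* ),$$ attained with the set $S^*$, and the corresponding portions of time $\pi_k=(1-\pi_1)x_k/\sum_{l}x_{k_l^*}$ are $$\pi_{k_1^*}=(1-\pi_1)\frac{\bar x_{k_1^*}(m)+\Delta(S^* )}{\sum_{l=1}^m\bar x_{k_l^*}(m)+\Delta(S^* )},\qquad \pi_{k_l^*}=(1-\pi_1)\frac{\bar x_{k_l^*}(m)}{\sum_{l'=1}^m\bar x_{k_{l'}^*}(m)+\Delta(S^* )}\ (l=2,\dots,m),$$ with $\pi_k=0$ for $k\in\{2,\dots,N'\}\setminus S^*$.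
   Context: Setting: graphs $G_1,\dots,G_{N'}$ on a common node set with adjacency matrices $A_l$, constant cure probability $\beta$ and infection probability $\gamma$; configuration $\mathcal C_l=(G_l,\beta,\gamma)$, $\mu_l=\beta-\gamma\lambda_1(A_l)$ where $\lambda_1(A)$ is the eigenvalue of largest modulus. $\mathcal C_1$ violates the epidemic threshold and the system must stay in it for portion of time $\pi_1$; $\mathcal C_2,\dots,\mathcal C_{N'}$ are moving-target-defense-induced configurations satisfying it, and $g(\mu_l)$ is the cost of inducing $\mathcal C_l$. The defender switches between $\mathcal C_1$ and $\mathcal C_k$, $k\in S$, by a continuous-time Markov chain with generator $Q$; $x_l=1/(-q_{ll})$ is the expected sojourn time in $\mathcal C_l$, and the portion of time in $\mathcal C_l$ is $x_l/\sum_p x_p$. The lower/upper bounds on the $x$'s are the sojourn-time conditions of a sufficient almost-sure convergence criterion, in which $\delta,a,b,c$ are constants such that there exist symmetric positive definite matrices $P_l$ with $aI<P_k<I$ for the satisfying configurations, $bI<P_1<cI$, and $\{P_l[\gamma A_l-\beta I]\}^s\le[\gamma\lambda_1(A_l)-\beta+\delta/2]P_l$. *)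

(* Defs.v *)
From mathcomp Require Import all_boot all_order all_algebra.
From mathcomp Require Import all_classical all_reals all_analysis.
Set Implicit Arguments. Unset Strict Implicit. Unset Printing Implicit Defensive.
Import Order.TTheory GRing.Theory Num.Theory.
Local Open Scope ring_scope.

(* Configurations are indexed by naturals 1..N'; mu : nat -> R, mu k = mu_k. *)

Definition xbar1 (R : realType) (mu1 delta b : R) : R :=
  (b - 1) / (2 * b * (- mu1 + delta)).

Definition xbark (R : realType) (mu : nat -> R) (delta a c : R) (m k : nat) : R :=
  ((c + m%:R - 1) / m%:R - a) / (2 * a * (mu k - delta)).

(* A nonempty subset S = {k_1 < ... < k_m'} of {2,...,N'}, represented by the
   strictly increasing list [:: k_1; ...; k_m'];  k_1 = head 0 S, m' = size S. *)
Definition admissible_set (N' : nat) (S : seq nat) : bool :=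
  [&& S != [::], sorted ltn S & all (fun k => (2 <= k <= N')%N) S].

Definition sum_xbar (R : realType) (mu : nat -> R) (delta a c : R) (S : seq nat) : R :=
  \sum_(k <- S) xbark mu delta a c (size S) k.

Definition Delta (R : realType) (mu : nat -> R) (delta a b c pi1 : R) (S : seq nat) : R :=
  (1 - pi1) / pi1 * xbar1 (mu 1%N) delta b - sum_xbar mu delta a c S.

Definition Gval (R : realType) (mu : nat -> R) (g : R -> R) (delta a b c pi1 : R)
    (S : seq nat) : R :=
  (\sum_(k <- S) xbark mu delta a c (size S) k * g (mu k)
     + g (mu (head 0%N S)) * Delta mu delta a b c pi1 S)
  / (sum_xbar mu delta a c S + Delta mu delta a b c pi1 S).

Definition inK (R : realType) (N' : nat) (mu : nat -> R) (delta a b c pi1 : R)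
    (S : seq nat) : Prop :=
  admissible_set N' S /\
  pi1 <= xbar1 (mu 1%N) delta b / (xbar1 (mu 1%N) delta b + sum_xbar mu delta a c S).

Definition Psi (R : realType) (mu : nat -> R) (g : R -> R) (pi1 : R)
    (S : seq nat) (x : nat -> R) : R :=
  pi1 * g (mu 1%N)
  + (1 - pi1) * ((\sum_(k <- S) x k * g (mu k)) / (\sum_(k <- S) x k)).

Definition feasible (R : realType) (mu : nat -> R) (delta a b c pi1 : R)
    (S : seq nat) (x1 : R) (x : nat -> R) : Prop :=
  [/\ 0 < x1,
      (forall k, k \in S -> 0 < x k /\ xbark mu delta a c (size S) k <= x k),
      \sum_(k <- S) x k = (1 - pi1) / pi1 * x1 &
      (1 - pi1) / pi1 * x1 <= (1 - pi1) / pi1 * xbar1 (mu 1%N) delta b].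

Definition xopt (R : realType) (mu : nat -> R) (delta a b c pi1 : R)
    (S : seq nat) (k : nat) : R :=
  if k == head 0%N S then
    xbark mu delta a c (size S) k + Delta mu delta a b c pi1 S
  else xbark mu delta a c (size S) k.

Definition portion (R : realType) (pi1 : R) (S : seq nat) (x : nat -> R) (k : nat) : R :=
  if k \in S then (1 - pi1) * x k / (\sum_(j <- S) x j) else 0.

(* Main.v *)
Require Import Defs.
From mathcomp Require Import all_boot all_order all_algebra.
From mathcomp Require Import all_classical all_reals all_analysis.
From mathcomp Require Import lra.
Import Order.TTheory GRing.Theory Num.Theory.
Set Implicit Arguments. Unset Strict Implicit.
Local Open Scope ring_scope.

Lemma g_mono (R : realType) (g : R -> R) :
  (forall x : R, 0 < x -> derivable g x 1) ->
  (forall x : R, 0 < x -> 0 <= derive1 g x) ->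
  forall x y : R, 0 < x -> x <= y -> g x <= g y.
Proof.
move=> dg dg0 x y x0 xy.
apply: (@ger0_derive1_ndecr R g x y) => //.
- move=> z; rewrite in_itv /= => /andP[xz _]; apply: dg; exact: lt_trans xz.
- move=> z; rewrite in_itv /= => /andP[xz _]; apply: dg0; exact: lt_trans xz.
- apply: derivable_within_continuous => z; rewrite in_itv /= => /andP[xz _].
  apply: dg; exact: lt_le_trans xz.
Qed.

Lemma mu_mono (R : realType) (N' : nat) (mu : nat -> R) :
  (forall k : nat, (2 <= k)%N -> (k < N')%N -> mu k < mu k.+1) ->
  forall i j, (2 <= i)%N -> (i <= j)%N -> (j <= N')%N -> mu i <= mu j.
Proof.
move=> hm i j hi hij hj; elim: j hij hj => [|j IH] hij hj.
  by move: hij; rewrite leqn0 => /eqP ->.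
move: hij; rewrite leq_eqVlt => /orP[/eqP -> //|]; rewrite ltnS => hij.
apply: le_trans (IH hij (ltnW hj)) _; apply: ltW; apply: hm => //.
exact: leq_trans hi hij.
Qed.
Lemma xbark_pos (R : realType) (mu : nat -> R) (delta a c : R) m k :
  0 < a -> a < 1 -> 1 < c -> delta < mu k -> (0 < m)%N ->
  0 < xbark mu delta a c m k.
Proof.
move=> a0 a1 c1 dk m0; rewrite /xbark.
have m0' : 0 < m%:R :> R by rewrite ltr0n.
have h1 : 1 < (c + m%:R - 1) / m%:R by rewrite ltr_pdivlMr // mul1r; lra.
apply: divr_gt0; first lra.
apply: mulr_gt0; [apply: mulr_gt0; lra|lra].
Qed.

Lemma sum_head (R : realType) (F : nat -> R) h t (D : R) :
  h \notin t ->
  \sum_(k <- h :: t) (if k == h then F k + D else F k) = \sum_(k <- h :: t) F k + D.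
Proof.
move=> ht; rewrite !big_cons eqxx -addrA [D + _]addrC addrA; congr (_ + _).
congr (_ + _).
rewrite big_seq [in RHS]big_seq; apply: eq_bigr => k kt.
by case: (k =P h) => [ekh|//]; move: ht; rewrite -ekh kt.
Qed.

Lemma sum_head2 (R : realType) (F G : nat -> R) h t (D : R) :
  h \notin t ->
  \sum_(k <- h :: t) ((if k == h then F k + D else F k) * G k) =
    \sum_(k <- h :: t) F k * G k + G h * D.
Proof.
move=> ht; rewrite !big_cons eqxx.
have -> : \sum_(j <- t) (if j == h then F j + D else F j) * G j = \sum_(j <- t) F j * G j.
  rewrite big_seq [in RHS]big_seq; apply: eq_bigr => k kt.
  by case: (k =P h) => [ekh|//]; move: ht; rewrite -ekh kt.
by rewrite mulrDl; lra.
Qed.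

Lemma inK_facts (R : realType) (N' : nat) (mu : nat -> R) (delta a b c pi1 : R) S :
  mu 1%N < 0 -> 0 < mu 2%N ->
  (forall k : nat, (2 <= k)%N -> (k < N')%N -> mu k < mu k.+1) ->
  0 < delta -> delta < mu 2%N -> 0 < a -> a < 1 -> 1 < b -> b < c -> 0 < pi1 ->
  inK N' mu delta a b c pi1 S ->
  exists h t, [/\ S = h :: t, h \notin t,
     (forall k, k \in S -> (2 <= k <= N')%N /\ (h <= k)%N),
     0 < sum_xbar mu delta a c S & 0 <= Delta mu delta a b c pi1 S].
Proof.
move=> mu1 mu2 hmu d0 d2 a0 a1 b1 bc p0 [/and3P[Sn Ss Sa] hp].
case: S Sn Ss Sa hp => [//|h t] _ Ss Sa hp.
have hpath : all (ltn h) t by exact: (order_path_min ltn_trans Ss).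
have ht : h \notin t.
  by apply/negP => /(allP hpath) /=; rewrite ltnn.
have hk : forall k, k \in h :: t -> (2 <= k <= N')%N /\ (h <= k)%N.
  move=> k kS; split; first exact: (allP Sa).
  move: kS; rewrite in_cons => /orP[/eqP -> //|kt].
  by apply: ltnW; apply: (allP hpath).
have xp : forall k, k \in h :: t -> 0 < xbark mu delta a c (size (h :: t)) k.
  move=> k kS; apply: xbark_pos => //; first lra.
  have [/andP[k2 kN] _] := hk k kS.
  apply: lt_le_trans d2 _; exact: (@mu_mono R N' mu hmu 2 k (leqnn 2) k2 kN).
have Xp : 0 < sum_xbar mu delta a c (h :: t).
  rewrite /sum_xbar big_cons.
  have := xp h (mem_head h t).
  have : 0 <= \sum_(j <- t) xbark mu delta a c (size (h :: t)) j.
    rewrite big_seq; apply: sumr_ge0 => k kt; apply: ltW; apply: xp.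
    by rewrite in_cons kt orbT.
  lra.
exists h, t; split => //.
have x1p : 0 < xbar1 (mu 1%N) delta b.
  rewrite /xbar1; apply: divr_gt0; first lra.
  apply: mulr_gt0; [apply: mulr_gt0; lra|lra].
move: hp; rewrite ler_pdivlMr; last lra.
move=> hp; rewrite /Delta subr_ge0 mulrAC ler_pdivlMr //; nra.
Qed.

Lemma key_ineq (R : realType) (X Dl T A B g1 : R) :
  0 < X -> 0 <= Dl -> 0 < T -> T <= X + Dl -> g1 * X <= A ->
  A + g1 * (T - X) <= B -> (A + g1 * Dl) / (X + Dl) <= B / T.
Proof.
move=> X0 D0 T0 TX AX BA.
rewrite ler_pdivlMr; last lra.
rewrite mulrAC ler_pdivrMr //.
have h1 : 0 <= (A - g1 * X) * (X + Dl - T) by apply: mulr_ge0; lra.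
have h2 : (A + g1 * (T - X)) * (X + Dl) <= B * (X + Dl) by apply: ler_wpM2r; lra.
nra.
lra.
Qed.

Theorem theorem6 (R : realType) (N' : nat) (mu : nat -> R) (g : R -> R)
    (delta a b c pi1 : R) (Sstar : seq nat) :
  (2 <= N')%N ->
  mu 1%N < 0 -> 0 < mu 2%N ->
  (forall k : nat, (2 <= k)%N -> (k < N')%N -> mu k < mu k.+1) ->
  0 < delta -> delta < mu 2%N ->
  0 < a -> a < 1 -> 1 < b -> b < c ->
  0 < pi1 ->
  pi1 <= xbar1 (mu 1%N) delta b
         / (xbar1 (mu 1%N) delta b + (c - a) / (2 * a * (mu N' - delta))) ->
  (forall x : R, 0 < x -> 0 < g x) ->
  (forall x : R, 0 < x -> derivable g x 1) ->
  (forall x : R, 0 < x -> 0 <= derive1 g x) ->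
  inK N' mu delta a b c pi1 Sstar ->
  (forall S, inK N' mu delta a b c pi1 S ->
     Gval mu g delta a b c pi1 Sstar <= Gval mu g delta a b c pi1 S) ->
  let V := pi1 * g (mu 1%N) + (1 - pi1) * Gval mu g delta a b c pi1 Sstar in
  let xs := xopt mu delta a b c pi1 Sstar in
  let m := size Sstar in
  let D := Delta mu delta a b c pi1 Sstar in
  [/\ feasible mu delta a b c pi1 Sstar (xbar1 (mu 1%N) delta b) xs,
      Psi mu g pi1 Sstar xs = V,
      (forall (S : seq nat) (x1 : R) (x : nat -> R),
          inK N' mu delta a b c pi1 S -> feasible mu delta a b c pi1 S x1 x ->
          V <= Psi mu g pi1 S x) &
      (forall k : nat, (2 <= k <= N')%N ->
          portion pi1 Sstar xs k =
          (if k == head 0%N Sstar then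
             (1 - pi1) * (xbark mu delta a c m k + D)
               / (sum_xbar mu delta a c Sstar + D)
           else if k \in Sstar then
             (1 - pi1) * xbark mu delta a c m k / (sum_xbar mu delta a c Sstar + D)
           else 0))].
Proof.
move=> hN mu1 mu2 hmu d0 d2 a0 a1 b1 bc p0 hp gpos dg dg0 KS Gmin.
have x1p : 0 < xbar1 (mu 1%N) delta b.
  rewrite /xbar1; apply: divr_gt0; first lra.
  apply: mulr_gt0; [apply: mulr_gt0; lra|lra].
have [h [t [Se ht hk Xp Dp]]] :=
  @inK_facts R N' mu delta a b c pi1 Sstar mu1 mu2 hmu d0 d2 a0 a1 b1 bc p0 KS.
have p1 : pi1 < 1.
  have := KS.2; rewrite ler_pdivlMr; last lra.
  move=> H; nra.
have mupos : forall k, (2 <= k <= N')%N -> delta < mu k.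
  move=> k /andP[k2 kN]; apply: lt_le_trans d2 _.
  exact: (@mu_mono R N' mu hmu 2 k (leqnn 2) k2 kN).
have gmono : forall i k, (2 <= i)%N -> (i <= k)%N -> (k <= N')%N -> g (mu i) <= g (mu k).
  move=> i k i2 ik kN; apply: g_mono => //.
    apply: lt_trans d0 _; apply: mupos; rewrite i2 /=; exact: leq_trans ik kN.
  exact: (@mu_mono R N' mu hmu i k i2 ik kN).
subst Sstar.
move=> V xs m D.
have hsumxs : \sum_(k <- h :: t) xs k = sum_xbar mu delta a c (h :: t) + D.
  by rewrite /xs /xopt /= (sum_head (xbark mu delta a c (size (h :: t)))).
split.
- split => //.
  + move=> k kS; rewrite /xs /xopt /=.
    have xk : 0 < xbark mu delta a c (size (h :: t)) k.
      apply: xbark_pos => //; first lra.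
      by apply: mupos; case: (hk k kS).
    by case: ifP => _; split; rewrite /D; lra.
  + by rewrite hsumxs /D /Delta /sum_xbar; lra.
- rewrite /Psi /V /Gval /xs /xopt /=.
  rewrite (sum_head2 (xbark mu delta a c (size (h :: t))) (fun k => g (mu k))) //.
  by rewrite (sum_head (xbark mu delta a c (size (h :: t)))).
- move=> S x1 x KS' [x1p' hx hsum hle].
  have [h' [t' [Se' ht' hk' Xp' Dp']]] :=
    @inK_facts R N' mu delta a b c pi1 S mu1 mu2 hmu d0 d2 a0 a1 b1 bc p0 KS'.
  rewrite /V /Psi lerD2l; apply: ler_wpM2l; first lra.
  apply: le_trans (Gmin S KS') _.
  subst S; rewrite /Gval /=.
  have gm : forall k, k \in h' :: t' -> g (mu h') <= g (mu k).
    move=> k kS; have [/andP[k2 kN] hk2] := hk' k kS.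
    have [/andP[h2 _] _] := hk' h' (mem_head h' t').
    exact: gmono.
  have xbp : forall k, k \in h' :: t' -> 0 < xbark mu delta a c (size (h' :: t')) k.
    move=> k kS; apply: xbark_pos => //; first lra.
    by apply: mupos; case: (hk' k kS).
  apply: key_ineq => //.
  + rewrite big_cons.
    have := (hx h' (mem_head h' t')).1.
    have : 0 <= \sum_(j <- t') x j.
      rewrite big_seq; apply: sumr_ge0 => k kt; apply: ltW.
      have kS : k \in h' :: t' by rewrite in_cons kt orbT.
      by case: (hx k kS).
    lra.
  + by rewrite hsum /Delta /sum_xbar; lra.
  + rewrite /sum_xbar mulr_sumr big_seq [X in _ <= X]big_seq; apply: ler_sum => k kS.
    rewrite mulrC; apply: ler_wpM2l; [exact: ltW (xbp k kS)|exact: gm].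
  + have e1 : \sum_(k <- h' :: t') (x k - xbark mu delta a c (size (h' :: t')) k) * g (mu k)
        = \sum_(k <- h' :: t') x k * g (mu k)
          - \sum_(k <- h' :: t') xbark mu delta a c (size (h' :: t')) k * g (mu k).
      by rewrite -sumrB; apply: eq_bigr => k _; rewrite mulrBl.
    have e2 : \sum_(k <- h' :: t') (x k - xbark mu delta a c (size (h' :: t')) k) * g (mu h')
        = (\sum_(k <- h' :: t') x k - sum_xbar mu delta a c (h' :: t')) * g (mu h').
      by rewrite -mulr_suml sumrB.
    have ineq : \sum_(k <- h' :: t') (x k - xbark mu delta a c (size (h' :: t')) k) * g (mu h')
        <= \sum_(k <- h' :: t') (x k - xbark mu delta a c (size (h' :: t')) k) * g (mu k).
      rewrite big_seq [X in _ <= X]big_seq; apply: ler_sum => k kS.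
      apply: ler_wpM2l; last exact: gm.
      by rewrite subr_ge0; exact: (hx k kS).2.
    rewrite e1 e2 in ineq; lra.
- move=> k hk2; rewrite /portion hsumxs /xs /xopt /= /m.
  case: (k =P h) => [->|nkh]; first by rewrite mem_head.
  by case: ifP.
Qed.
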